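(* Let $G=(V,w,m)$ be a locally finite weighted graph, let $x,z\in V$ with $d(x,z)=2$, and let $f:V\to\mathbb R$ satisfy $$\frac{f(x)+f(z)}2=\frac{\sum_{y:\,x\sim y\sim z}f(y)\,w(x,y)w(y,z)/m(y)}{\sum_{y:\,x\sim y\sim z}w(x,y)w(y,z)/m(y)}.$$ Then for every $r\neq0$, $\Gamma_2f(x)<\Gamma_2\big(f+r\mathbf 1_{\{z\}}\big)(x)$.
   Context: A weighted graph is $G=(V,w,m)$ with $V$ countable, $w:V\times V\to[0,\infty)$ symmetric with $w(x,x)=0$, $m:V\to(0,\infty)$; $x\sim y$ iff $w(x,y)>0$. Laplacian $\Delta f(x)=\frac1{m(x)}\sum_yw(x,y)(f(y)-f(x))$. $d$ is the combinatorial distance. $2\Gamma(f,g)=\Delta(fg)-f\Delta g-g\Delta f$, $2\Gamma_2(f,g)=\Delta\Gamma(f,g)-\Gamma(f,\Delta g)-\Gamma(g,\Delta f)$, $\Gamma_2f=\Gamma_2(f,f)$. $\mathbf 1_{\{z\}}$ is the indicator function of $\{z\}$. *)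

(* Defs.v *)
From Stdlib Require Import Reals List Lra.
Import ListNotations.
Open Scope R_scope.

(* Local finiteness is witnessed by an explicit duplicate-free list of neighbours
   of each vertex; this list is determined by w up to permutation. *)
Record wgraph := {
  V :> Type;
  enc : V -> nat;                      (* countability: injection into nat *)
  enc_inj : forall x y, enc x = enc y -> x = y;
  w : V -> V -> R;
  m : V -> R;
  w_nonneg : forall x y, 0 <= w x y;
  w_sym : forall x y, w x y = w y x;
  w_diag : forall x, w x x = 0;
  m_pos : forall x, 0 < m x;
  nbrs : V -> list V;
  nbrs_nodup : forall x, NoDup (nbrs x);
  nbrs_spec : forall x y, In y (nbrs x) <-> 0 < w x y
}.

Definition sum_list {T : Type} (l : list T) (g : T -> R) : R :=
  fold_right (fun y acc => g y + acc) 0 l.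

Section Ops.
Variable G : wgraph.

Definition adj (x y : G) : Prop := 0 < w G x y.

Definition Lap (f : G -> R) (x : G) : R :=
  / m G x * sum_list (nbrs G x) (fun y => w G x y * (f y - f x)).

Definition Gam (f g : G -> R) (x : G) : R :=
  / 2 * (Lap (fun y => f y * g y) x - f x * Lap g x - g x * Lap f x).

Definition Gam2 (f g : G -> R) (x : G) : R :=
  / 2 * (Lap (Gam f g) x - Gam f (Lap g) x - Gam g (Lap f) x).

Definition Gam2_diag (f : G -> R) (x : G) : R := Gam2 f f x.

Inductive walk : G -> G -> nat -> Prop :=
| walk_nil : forall x, walk x x 0
| walk_cons : forall x y z n, adj x y -> walk y z n -> walk x z (S n).

Definition dist_eq (x z : G) (n : nat) : Prop :=
  walk x z n /\ forall k, (k < n)%nat -> ~ walk x z k.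

Definition indic (z : G) (y : G) : R :=
  if Nat.eq_dec (enc G y) (enc G z) then 1 else 0.

Definition sum_common (x z : G) (g : G -> R) : R :=
  sum_list (nbrs G x)
    (fun y => if Rlt_dec 0 (w G y z) then g y else 0).

End Ops.

(* Main.v *)
Require Import Defs.
From Stdlib Require Import Reals.
From Stdlib Require Import Lra List Classical FunctionalExtensionality.
Import ListNotations.
Open Scope R_scope.

Lemma sum_list_ext_in {T : Type} (l : list T) (p q : T -> R) :
  (forall y, In y l -> p y = q y) -> sum_list l p = sum_list l q.
Proof.
  induction l as [|a l IH]; intros H; simpl; auto.
  rewrite H by (left; auto). rewrite IH; auto. intros; apply H; right; auto.
Qed.

Lemma sum_list_lin {T : Type} (l : list T) (p q : T -> R) a b :
  sum_list l (fun y => a * p y + b * q y) = a * sum_list l p + b * sum_list l q.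
Proof. induction l; simpl; [ring|]. rewrite IHl; ring. Qed.

Lemma sum_list_zero {T : Type} (l : list T) (p : T -> R) :
  (forall y, In y l -> p y = 0) -> sum_list l p = 0.
Proof.
  intros H. transitivity (sum_list l (fun y => 0 * p y + 0 * p y)).
  apply sum_list_ext_in; intros y Hy; rewrite H; auto; ring.
  rewrite sum_list_lin; ring.
Qed.

Lemma sum_list_pos {T : Type} (l : list T) (p : T -> R) y0 :
  (forall y, In y l -> 0 <= p y) -> In y0 l -> 0 < p y0 -> 0 < sum_list l p.
Proof.
  induction l as [|a l IH]; intros H Hin Hp; simpl in *; [contradiction|].
  assert (Hs : 0 <= sum_list l p).
  { clear IH Hin. induction l; simpl; [lra|].
    assert (0 <= p a0) by (apply H; right; left; auto).
    assert (0 <= sum_list l p); [apply IHl; intros; apply H; simpl in *; tauto|lra]. }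
  destruct Hin as [<-|Hin].
  - lra.
  - assert (0 <= p a) by (apply H; left; auto).
    assert (0 < sum_list l p) by (apply IH; auto). lra.
Qed.

Lemma Vdec (G : wgraph) (u v : G) : {u = v} + {u <> v}.
Proof.
  destruct (Nat.eq_dec (enc G u) (enc G v)) as [e|n].
  left; apply enc_inj; auto. right; intro; subst; auto.
Qed.

Lemma indic_z (G : wgraph) (z : G) : indic G z z = 1.
Proof. unfold indic; destruct Nat.eq_dec; auto; congruence. Qed.

Lemma indic_nz (G : wgraph) (z u : G) : u <> z -> indic G z u = 0.
Proof. unfold indic; destruct Nat.eq_dec as [e|]; auto. intros H; elim H; apply enc_inj; auto. Qed.

Lemma sum_indic (G : wgraph) (z : G) (l : list G) (c : G -> R) :
  NoDup l ->
  (In z l -> sum_list l (fun u => c u * indic G z u) = c z) /\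
  (~ In z l -> sum_list l (fun u => c u * indic G z u) = 0).
Proof.
  induction l as [|a l IH]; intros Hnd; simpl.
  - split; intros; [contradiction|auto].
  - inversion Hnd; subst. destruct (IH H2) as [I1 I2].
    destruct (Vdec G a z) as [<-|n].
    + rewrite indic_z, I2 by auto. split; intros; [ring|]. exfalso; auto.
    + rewrite indic_nz by auto. split; intros Hz.
      * destruct Hz as [Hz|Hz]; [congruence|]. rewrite I1; auto; ring.
      * rewrite I2; [ring|]. auto.
Qed.

Lemma sum_w_indic (G : wgraph) (z y : G) (d : G -> R) :
  sum_list (nbrs G y) (fun u => w G y u * d u * indic G z u) = w G y z * d z.
Proof.
  destruct (sum_indic G z (nbrs G y) (fun u => w G y u * d u) (nbrs_nodup G y)) as [I1 I2].
  destruct (classic (In z (nbrs G y))) as [Hi|Hi].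
  - apply I1; auto.
  - rewrite I2 by auto.
    assert (w G y z = 0).
    { pose proof (w_nonneg G y z). assert (~ 0 < w G y z) by (rewrite <- nbrs_spec; auto). lra. }
    rewrite H; ring.
Qed.

Lemma Lap_ext (G : wgraph) (F F' : G -> R) x :
  (forall u, F u = F' u) -> Lap G F x = Lap G F' x.
Proof. intros H; f_equal; apply functional_extensionality; auto. Qed.

Lemma Lap_comb (G : wgraph) (F f g : G -> R) a x :
  (forall y, F y = f y + a * g y) -> Lap G F x = Lap G f x + a * Lap G g x.
Proof.
  intros H. unfold Lap.
  rewrite (sum_list_ext_in _ _ (fun y => 1 * (w G x y * (f y - f x)) + a * (w G x y * (g y - g x)))).
  rewrite sum_list_lin; ring.
  intros; rewrite !H; ring.
Qed.

Lemma Lap_vanish (G : wgraph) (F : G -> R) x :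
  F x = 0 -> (forall y, In y (nbrs G x) -> F y = 0) -> Lap G F x = 0.
Proof.
  intros H0 H. unfold Lap. rewrite sum_list_zero; [ring|].
  intros y Hy; rewrite H0, H by auto; ring.
Qed.

Lemma Gam_addl (G : wgraph) (F f1 f2 g : G -> R) a x :
  (forall y, F y = f1 y + a * f2 y) -> Gam G F g x = Gam G f1 g x + a * Gam G f2 g x.
Proof.
  intros H. unfold Gam.
  rewrite (Lap_comb G (fun y => F y * g y) (fun y => f1 y * g y) (fun y => f2 y * g y) a)
    by (intros; rewrite H; ring).
  rewrite (Lap_comb G F f1 f2 a) by auto. rewrite H. ring.
Qed.

Lemma Gam_addr (G : wgraph) (F f1 f2 g : G -> R) a x :
  (forall y, F y = f1 y + a * f2 y) -> Gam G g F x = Gam G g f1 x + a * Gam G g f2 x.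
Proof.
  intros H. unfold Gam.
  rewrite (Lap_comb G (fun y => g y * F y) (fun y => g y * f1 y) (fun y => g y * f2 y) a)
    by (intros; rewrite H; ring).
  rewrite (Lap_comb G F f1 f2 a) by auto. rewrite H. ring.
Qed.

Lemma Gam_sym (G : wgraph) (f g : G -> R) x : Gam G f g x = Gam G g f x.
Proof.
  unfold Gam. rewrite (Lap_ext G (fun y => f y * g y) (fun y => g y * f y)) by (intros; ring). ring.
Qed.

Lemma Gam2_sym (G : wgraph) (f g : G -> R) x : Gam2 G f g x = Gam2 G g f x.
Proof.
  unfold Gam2. rewrite (Lap_ext G (Gam G f g) (Gam G g f)) by (intros; apply Gam_sym). ring.
Qed.

Lemma Gam2_addl (G : wgraph) (F f1 f2 g : G -> R) a x :
  (forall y, F y = f1 y + a * f2 y) -> Gam2 G F g x = Gam2 G f1 g x + a * Gam2 G f2 g x.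
Proof.
  intros H. unfold Gam2.
  rewrite (Lap_comb G (Gam G F g) (Gam G f1 g) (Gam G f2 g) a) by (intros; apply Gam_addl; auto).
  rewrite (Gam_addl G F f1 f2 (Lap G g) a) by auto.
  rewrite (Gam_addr G (Lap G F) (Lap G f1) (Lap G f2) g a) by (intros; apply Lap_comb; auto).
  ring.
Qed.

Lemma Lap_mul_indic (G : wgraph) (z : G) (d : G -> R) y :
  indic G z y = 0 -> Lap G (fun u => d u * indic G z u) y = w G y z * d z / m G y.
Proof.
  intros Hy. unfold Lap.
  rewrite (sum_list_ext_in _ _ (fun u => w G y u * d u * indic G z u)).
  rewrite sum_w_indic. unfold Rdiv; ring.
  intros u _. rewrite Hy. ring.
Qed.

Theorem lemma3 (G : wgraph) (x z : G) (f : G -> R) :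
  dist_eq G x z 2 ->
  (f x + f z) / 2 =
    sum_common G x z (fun y => f y * w G x y * w G y z / m G y) /
    sum_common G x z (fun y => w G x y * w G y z / m G y) ->
  forall r : R, r <> 0 ->
    Gam2_diag G f x < Gam2_diag G (fun y => f y + r * indic G z y) x.
Proof.
  intros [Hw Hmin] Hq r Hr.
  set (g := indic G z).
  set (L := nbrs G x).
  assert (Hxz : x <> z).
  { intro e; subst. apply (Hmin 0%nat); [auto|constructor]. }
  assert (HLz : forall y, In y L -> y <> z).
  { intros y Hy e; subst. apply (Hmin 1%nat); [auto|].
    apply walk_cons with z; [|constructor]. unfold adj. apply nbrs_spec; auto. }
  assert (gx : g x = 0) by (apply indic_nz; auto).
  assert (gy : forall y, In y L -> g y = 0) by (intros; apply indic_nz; auto).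
  assert (mpos : forall y, 0 < m G y) by apply m_pos.
  assert (Lgx : Lap G g x = 0) by (apply Lap_vanish; auto).
  assert (Lgy : forall y, In y L -> Lap G g y = w G y z / m G y).
  { intros y Hy. rewrite (Lap_ext G g (fun u => 1 * g u)) by (intros; ring).
    unfold g; rewrite Lap_mul_indic by (apply gy; auto). field. apply Rgt_not_eq, mpos. }
  set (a := fun y => w G x y * w G y z / m G y).
  set (b := fun y => f y * w G x y * w G y z / m G y).
  set (S := sum_list L a). set (T := sum_list L b).
  assert (HS : sum_common G x z (fun y => w G x y * w G y z / m G y) = S).
  { unfold sum_common, S. apply sum_list_ext_in. intros y _. destruct Rlt_dec; auto.
    pose proof (w_nonneg G y z). unfold a. assert (w G y z = 0) by lra. rewrite H0. unfold Rdiv; ring. }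
  assert (HT : sum_common G x z (fun y => f y * w G x y * w G y z / m G y) = T).
  { unfold sum_common, T. apply sum_list_ext_in. intros y _. destruct Rlt_dec; auto.
    pose proof (w_nonneg G y z). unfold b. assert (w G y z = 0) by lra. rewrite H0. unfold Rdiv; ring. }
  assert (Spos : 0 < S).
  { inversion Hw as [|x0 y z0 n Hxy Wyz]; subst. inversion Wyz as [|y0 y1 z1 n1 Hyy Wz]; subst. inversion Wz; subst.
    apply sum_list_pos with y.
    - intros u _. unfold a. pose proof (w_nonneg G x u). pose proof (w_nonneg G u z).
      pose proof (mpos u). apply Rmult_le_pos; [apply Rmult_le_pos; lra|].
      apply Rlt_le, Rinv_0_lt_compat; auto.
    - unfold L; apply nbrs_spec; auto.
    - unfold a. unfold adj in *. apply Rmult_lt_0_compat; [apply Rmult_lt_0_compat; auto|].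
      apply Rinv_0_lt_compat; auto. }
  rewrite HS, HT in Hq.
  assert (HTS : (f x + f z) * S = 2 * T).
  { rewrite <- (Rmult_1_r T). rewrite <- (Rinv_r S) by lra.
    replace (f x + f z) with (2 * ((f x + f z) / 2)) by field. rewrite Hq. field. lra. }
  assert (Ggg_x : Gam G g g x = 0).
  { unfold Gam. rewrite Lap_vanish; auto. rewrite gx; ring.
    rewrite gx; ring. intros y Hy; rewrite gy; auto; ring. }
  assert (Ggg_y : forall y, In y L -> Gam G g g y = / 2 * (w G y z / m G y)).
  { intros y Hy. unfold Gam. unfold g at 1 2; rewrite Lap_mul_indic by (apply gy; auto).
    fold g. rewrite (gy y Hy). unfold g; rewrite indic_z. unfold Rdiv; ring. }
  assert (GgLg : forall h, Gam G g h x = 0).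
  { intros h. unfold Gam. rewrite Lap_vanish; auto. rewrite gx, Lgx; ring.
    rewrite gx; ring. intros y Hy; rewrite gy; auto; ring. }
  assert (E1 : Gam2 G g g x = / 4 * / m G x * S).
  { unfold Gam2. rewrite !GgLg. unfold Lap. fold L.
    rewrite (sum_list_ext_in _ _ (fun y => / 2 * a y + 0 * a y)).
    rewrite sum_list_lin. fold S. field. apply Rgt_not_eq, mpos.
    intros y Hy. rewrite Ggg_x, Ggg_y by auto. unfold a. field. apply Rgt_not_eq, mpos. }
  assert (Gfg_x : Gam G f g x = 0).
  { unfold Gam. rewrite Lap_vanish; auto. rewrite gx, Lgx; ring.
    rewrite gx; ring. intros y Hy; rewrite gy; auto; ring. }
  assert (Gfg_y : forall y, In y L -> Gam G f g y = / 2 * (w G y z * f z / m G y - f y * (w G y z / m G y))).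
  { intros y Hy. unfold Gam. unfold g at 1; rewrite Lap_mul_indic by (apply gy; auto).
    fold g. rewrite (gy y Hy), (Lgy y Hy). ring. }
  assert (A1 : Lap G (fun y => f y * Lap G g y) x = / m G x * T).
  { unfold Lap at 1. fold L. rewrite Lgx. f_equal.
    apply sum_list_ext_in. intros y Hy. rewrite (Lgy y Hy). unfold b. field. apply Rgt_not_eq, mpos. }
  assert (A2 : Lap G (Lap G g) x = / m G x * S).
  { unfold Lap at 1. fold L. rewrite Lgx. f_equal.
    apply sum_list_ext_in. intros y Hy. rewrite (Lgy y Hy). unfold a. field. apply Rgt_not_eq, mpos. }
  assert (GfLg : Gam G f (Lap G g) x = / 2 * / m G x * (T - f x * S)).
  { unfold Gam. rewrite Lgx, A1, A2. ring. }
  assert (E2 : Gam2 G f g x = / 4 * / m G x * ((f x + f z) * S - 2 * T)).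
  { unfold Gam2. rewrite GgLg, GfLg. unfold Lap at 1. fold L.
    rewrite (sum_list_ext_in _ _ (fun y => (/ 2 * f z) * a y + (- / 2) * b y)).
    rewrite sum_list_lin. fold S T. field. apply Rgt_not_eq, mpos.
    intros y Hy. rewrite Gfg_x, Gfg_y by auto. unfold a, b. field. apply Rgt_not_eq, mpos. }
  unfold Gam2_diag.
  set (h := fun y => f y + r * g y).
  rewrite (Gam2_addl G h f g h r x) by (intros; unfold h, g; auto).
  rewrite (Gam2_sym G f h), (Gam2_sym G g h).
  rewrite (Gam2_addl G h f g f r x) by (intros; unfold h, g; auto).
  rewrite (Gam2_addl G h f g g r x) by (intros; unfold h, g; auto).
  rewrite (Gam2_sym G g f), E1, E2.
  rewrite HTS. replace (2 * T - 2 * T) with 0 by ring.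
  assert (0 < / 4 * / m G x * S).
  { apply Rmult_lt_0_compat; auto. apply Rmult_lt_0_compat; [lra|]. apply Rinv_0_lt_compat; auto. }
  assert (0 < r * r) by (apply Rsqr_pos_lt; auto).
  nra.
Qed.
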